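(* Let $A\in\mathbb{C}^{n\times n}$ with $\|A\|_F=1$, $\lambda\in\mathbb{C}$, and $v,v'\in\mathbb{C}^n$ nonzero with $Av=\lambda v$. If $3.6\,\mu(A,\lambda,v)\,d_{\mathbb{P}}(v,v')\le\varepsilon<1$, then $\frac{\mu(A,\lambda,v)}{1+\varepsilon}\le\mu(A,\lambda,v')\le\frac{\mu(A,\lambda,v)}{1-\varepsilon}$.
   Context: $\|\cdot\|_F$ is the Frobenius norm. $d_{\mathbb{P}}(v,v')=\arccos(|\langle v,v'\rangle|/(\|v\|\|v'\|))$. For $v\ne0$, $T_v=v^\perp$, $P_{v^\perp}$ the orthogonal projection onto $T_v$, $A_{\lambda,v}=P_{v^\perp}(A-\lambda\mathrm{Id})|_{T_v}$, and $\mu(A,\lambda,v)=\|A\|_F\|A_{\lambda,v}^{-1}\|$ (operator norm; $\infty$ if not invertible). *)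

(* Defs.v *)
From HB Require Import structures.
From mathcomp Require Import all_boot all_order all_algebra.
From mathcomp Require Import all_classical all_reals all_analysis.
From mathcomp Require Import complex.
Set Implicit Arguments. Unset Strict Implicit. Unset Printing Implicit Defensive.
Import Order.TTheory GRing.Theory Num.Theory.
Local Open Scope ring_scope.
Local Open Scope complex_scope.

Section Defs.
Variable R : realType.
Variable n : nat.
Local Notation C := R[i].

Definition cmod (z : C) : R := let: a +i* b := z in Num.sqrt (a ^+ 2 + b ^+ 2).

Definition cinner (u w : 'cV[C]_n) : C := \sum_(i < n) u i 0 * (w i 0)^*.

Definition vnorm (u : 'cV[C]_n) : R := Num.sqrt (\sum_(i < n) cmod (u i 0) ^+ 2).

Definition frob (A : 'M[C]_n) : R :=
  Num.sqrt (\sum_(i < n) \sum_(j < n) cmod (A i j) ^+ 2).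

Definition dP (v v' : 'cV[C]_n) : R :=
  acos (cmod (cinner v v') / (vnorm v * vnorm v')).

Definition Tv (v : 'cV[C]_n) : set 'cV[C]_n := [set u | cinner u v = 0].

Definition Pperp (v u : 'cV[C]_n) : 'cV[C]_n := u - (cinner u v / cinner v v) *: v.

Definition Alv (A : 'M[C]_n) (l : C) (v w : 'cV[C]_n) : 'cV[C]_n :=
  Pperp v ((A - l%:M) *m w).

Definition Alv_invertible (A : 'M[C]_n) (l : C) (v : 'cV[C]_n) : Prop :=
  forall u, Tv v u -> exists! w, Tv v w /\ Alv A l v w = u.

(* operator norm of the inverse of A_{lambda,v}:
   sup over u in T_v of ||A_{lambda,v}^{-1} u|| / ||u||
   (w ranges over the unique preimage of u in T_v; u = 0 gives 0) *)
Definition Alv_inv_opnorm (A : 'M[C]_n) (l : C) (v : 'cV[C]_n) : \bar R :=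
  ereal_sup [set x : \bar R | exists u w, Tv v u /\ Tv v w /\ Alv A l v w = u /\
                                          x = (vnorm w / vnorm u)%:E].

Definition mu (A : 'M[C]_n) (l : C) (v : 'cV[C]_n) : \bar R :=
  if `[< Alv_invertible A l v >] then ((frob A)%:E * Alv_inv_opnorm A l v)%E
  else +oo%E.

End Defs.

(* Main.v *)
Require Import Defs.
From HB Require Import structures.
From mathcomp Require Import all_boot all_order all_algebra.
From mathcomp Require Import all_classical all_reals all_analysis.
From mathcomp Require Import complex ring lra.
Import Order.TTheory GRing.Theory Num.Theory numFieldNormedType.Exports.
Local Open Scope ring_scope.

Lemma sin_le_id {R : realType} (x : R) : 0 <= x -> sin x <= x.
Proof.
move=> x0.
have cf : continuous (fun t : R => t - sin t).
  move=> t; apply: continuousB => //; exact: continuous_sin.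
have [c _ H] := @MVT_segment R (fun t => t - sin t) (fun t => 1 - cos t) 0 x x0
  (fun t _ => _) (continuous_subspaceT cf).
  move: H; rewrite sin0 !subr0 => H.
  by rewrite -subr_ge0 H mulr_ge0 // subr_ge0 cos_le1.
Qed.

Lemma trig_bound (R : realType) (c : R) : 0 <= c <= 1 ->
  4 * Num.sqrt (1 - c) <= 36 / 10 * acos c.
Proof.
move=> /andP[c0 c1].
have cI : -1 <= c <= 1 by apply/andP; split => //; lra.
have d0 := acos_ge0 cI.
have dpi := acos_lepi cI.
have cd : cos (acos c) = c by apply: acosK; rewrite in_itv /=.
set d := acos c in d0 dpi cd *.
have y0 : 0 <= d / 2 by lra.
have ypi : d / 2 <= pi by have := pi_ge0 R; lra.
have sy0 : 0 <= sin (d / 2) by apply: sin_ge0_pi; rewrite y0 ypi.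
have sy := sin_le_id _ y0.
have e : 1 - c = 2 * sin (d / 2) ^+ 2.
  rewrite -cd -[X in cos X](@divfK _ 2) // mulr_natr cos_mulr2n sin2cos2; lra.
have h1 : 1 - c <= d ^+ 2 / 2.
  rewrite e. have : sin (d / 2) ^+ 2 <= (d / 2) ^+ 2 by rewrite ler_pXn2r // nnegrE.
  lra.
rewrite -(@ler_pXn2r _ 2) // ?nnegrE; last 2 first.
- by rewrite mulr_ge0 // sqrtr_ge0.
- by rewrite mulr_ge0.
rewrite !exprMn sqr_sqrtr; last lra.
lra.
Qed.

Set Implicit Arguments. Unset Strict Implicit.
Local Open Scope complex_scope.

Section Basics.
Variable R : realType.
Variable n : nat.
Local Notation C := R[i].
Local Notation V := 'cV[C]_n.
Implicit Types (u v w x y : V) (k z : C).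
Local Notation cj z := (@Num.conj C z).

Lemma cjK z : cj (cj z) = z. Proof. exact: conjcK. Qed.
Lemma cjR (r : R) : cj (r%:C) = r%:C. Proof. exact: conjc_real. Qed.
Lemma cj_eq0 z : (cj z == 0) = (z == 0). Proof. exact: conjc_eq0. Qed.
Lemma cj0 : cj 0 = 0. Proof. exact: conjc0. Qed.


Lemma cinnerDl u w x : cinner (u + w) x = cinner u x + cinner w x.
Proof. by rewrite /cinner -big_split /=; apply: eq_bigr => i _; rewrite !mxE mulrDl. Qed.

Lemma cinnerZl k u x : cinner (k *: u) x = k * cinner u x.
Proof. by rewrite /cinner mulr_sumr; apply: eq_bigr => i _; rewrite !mxE mulrA. Qed.

Lemma cinnerC u x : cinner x u = cj (cinner u x).
Proof.
rewrite /cinner rmorph_sum; apply: eq_bigr => i _.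
by rewrite rmorphM /= cjK mulrC.
Qed.

Lemma cinnerDr u w x : cinner x (u + w) = cinner x u + cinner x w.
Proof. by rewrite cinnerC cinnerDl rmorphD /= -!cinnerC. Qed.

Lemma cinnerZr k u x : cinner x (k *: u) = cj k * cinner x u.
Proof. by rewrite cinnerC cinnerZl rmorphM /= -cinnerC. Qed.

Lemma cinnerNl u x : cinner (- u) x = - cinner u x.
Proof. by rewrite -scaleN1r cinnerZl mulN1r. Qed.

Lemma cinnerNr u x : cinner x (- u) = - cinner x u.
Proof. by rewrite cinnerC cinnerNl rmorphN /= -cinnerC. Qed.

Lemma cinnerBl u w x : cinner (u - w) x = cinner u x - cinner w x.
Proof. by rewrite cinnerDl cinnerNl. Qed.

Lemma cinnerBr u w x : cinner x (u - w) = cinner x u - cinner x w.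
Proof. by rewrite cinnerDr cinnerNr. Qed.

Lemma cinner0l x : cinner 0 x = 0.
Proof. by rewrite -(scale0r 0) cinnerZl mul0r. Qed.

Lemma cinner0r x : cinner x 0 = 0.
Proof. by rewrite cinnerC cinner0l cj0. Qed.

Lemma rcE (x : R) : (real_complex R : {rmorphism R -> C}) x = x%:C.
Proof. by []. Qed.

Lemma rcB (a b : R) : (a - b)%:C = a%:C - b%:C :> C.
Proof. exact: (rmorphB (real_complex R : {rmorphism R -> C})). Qed.
Lemma rcD (a b : R) : (a + b)%:C = a%:C + b%:C :> C.
Proof. exact: (rmorphD (real_complex R : {rmorphism R -> C})). Qed.
Lemma rcM (a b : R) : (a * b)%:C = a%:C * b%:C :> C.
Proof. exact: (rmorphM (real_complex R : {rmorphism R -> C})). Qed.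
Lemma rcV (a : R) : (a^-1)%:C = (a%:C)^-1 :> C.
Proof. exact: (fmorphV (real_complex R : {rmorphism R -> C})). Qed.

Lemma conjV (z : C) : cj (z^-1) = (cj z)^-1.
Proof. exact: (fmorphV (@Num.conj C : {rmorphism C -> C})). Qed.
Lemma conjM (z k : C) : cj (z * k) = cj z * cj k.
Proof. exact: (rmorphM (@Num.conj C : {rmorphism C -> C})). Qed.

Definition cm2 (z : C) : R := complex.Re z ^+ 2 + complex.Im z ^+ 2.

Lemma cm2_ge0 z : 0 <= cm2 z.
Proof. by rewrite /cm2 addr_ge0 // sqr_ge0. Qed.

Lemma cmodE z : cmod z = Num.sqrt (cm2 z).
Proof. by case: z. Qed.

Lemma cmod_ge0 z : 0 <= cmod z.
Proof. by rewrite cmodE sqrtr_ge0. Qed.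

Lemma cmod_sqr z : cmod z ^+ 2 = cm2 z.
Proof. by rewrite cmodE sqr_sqrtr // cm2_ge0. Qed.

Lemma cm2E z : (cm2 z)%:C = z * cj z.
Proof.
case: z => a b; rewrite /cm2 /=.
apply/eqP; rewrite eq_complex /=; apply/andP; split; apply/eqP; ring.
Qed.

Lemma cm2_eq0 z : cm2 z = 0 -> z = 0.
Proof.
case: z => a b; rewrite /cm2 /= => h.
have ha : a = 0 by apply/eqP; rewrite -sqrf_eq0; apply/eqP; nra.
have hb : b = 0 by apply/eqP; rewrite -sqrf_eq0; apply/eqP; nra.
by rewrite ha hb.
Qed.

Lemma cm2M z k : cm2 (z * k) = cm2 z * cm2 k.
Proof. case: z => a b; case: k => c d; rewrite /cm2 /=; ring. Qed.

Lemma cm2J z : cm2 (cj z) = cm2 z.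
Proof. case: z => a b; rewrite /cm2 /=; ring. Qed.

Lemma Re_le_cmod z : complex.Re z <= cmod z.
Proof.
rewrite cmodE; apply: (le_trans (ler_norm _)); rewrite -sqrtr_sqr; apply: ler_wsqrtr.
by rewrite /cm2 lerDl sqr_ge0.
Qed.

Definition nn u : R := \sum_(i < n) cmod (u i 0) ^+ 2.

Lemma nn_ge0 u : 0 <= nn u.
Proof. by rewrite /nn sumr_ge0 // => i _; rewrite sqr_ge0. Qed.

Lemma vnormE u : vnorm u = Num.sqrt (nn u).
Proof. by []. Qed.

Lemma vnorm_ge0 u : 0 <= vnorm u.
Proof. exact: sqrtr_ge0. Qed.

Lemma vnorm_sqr u : vnorm u ^+ 2 = nn u.
Proof. by rewrite vnormE sqr_sqrtr // nn_ge0. Qed.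

Lemma cinner_nn u : cinner u u = (nn u)%:C.
Proof.
rewrite /nn /cinner rmorph_sum; apply: eq_bigr => i _.
by rewrite cmod_sqr; exact: (esym (cm2E _)).
Qed.

Lemma nn_eq0 u : nn u = 0 -> u = 0.
Proof.
move=> h; apply/matrixP => i j; rewrite ord1 mxE; apply: cm2_eq0.
rewrite -cmod_sqr; apply/eqP; move/eqP: h; rewrite psumr_eq0 => [/allP H|k _].
  by apply: H; rewrite mem_index_enum.
by rewrite sqr_ge0.
Qed.

Lemma vnorm_eq0 u : vnorm u = 0 -> u = 0.
Proof. by move=> h; apply: nn_eq0; rewrite -vnorm_sqr h expr0n. Qed.

Lemma nn0 : nn (0 : V) = 0.
Proof. by apply/complexI; rewrite -cinner_nn cinner0l. Qed.


Lemma nnZ k u : nn (k *: u) = cm2 k * nn u.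
Proof.
apply: complexI; rewrite rmorphM /= -!cinner_nn cinnerZl cinnerZr cm2E; ring.
Qed.

Lemma vnormZ k u : vnorm (k *: u) = cmod k * vnorm u.
Proof. by rewrite !vnormE nnZ sqrtrM ?cm2_ge0 // cmodE. Qed.

Lemma vnormN u : vnorm (- u) = vnorm u.
Proof.
rewrite !vnormE -scaleN1r nnZ.
have -> : cm2 (-1 : C) = 1 by rewrite /cm2 /=; ring.
by rewrite mul1r.
Qed.

Lemma nnD x y : nn (x + y) = nn x + nn y + 2 * complex.Re (cinner x y).
Proof.
apply: complexI; rewrite !rmorphD rmorphM /= -!cinner_nn.
rewrite cinnerDl !cinnerDr (cinnerC x y).
have -> : (2 : R)%:C = 2%:R :> C by rewrite rmorph_nat.
set z := cinner x y.
rewrite -addcJ; ring.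
Qed.

Lemma nn_orth x y : cinner x y = 0 -> nn (x + y) = nn x + nn y.
Proof. by move=> h; rewrite nnD h /= mulr0 addr0. Qed.

Lemma cm20 : cm2 0 = 0.
Proof. by rewrite /cm2 /=; ring. Qed.

Lemma CS x y : cm2 (cinner x y) <= nn x * nn y.
Proof.
have [y0|yn] := eqVneq (nn y) 0.
  by rewrite y0 (nn_eq0 y0) cinner0r mulr0 cm20.
have ypos : 0 < nn y by rewrite lt_def yn nn_ge0.
set z := cinner x y; set t := z / (nn y)%:C.
have h : (nn (x - t *: y))%:C = (nn x - cm2 z / nn y)%:C.
  rewrite -cinner_nn !cinnerBl !cinnerBr !cinnerZl !cinnerZr !cinner_nn.
  rewrite rcB rcM rcV cm2E.
  rewrite (cinnerC x y) -/z /t conjM conjV cjR.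
  field.
  by apply/eqP => /complexI; apply/eqP.
have := nn_ge0 (x - t *: y); rewrite (complexI h) subr_ge0.
by rewrite ler_pdivrMr.
Qed.

Lemma CS' x y : cmod (cinner x y) <= vnorm x * vnorm y.
Proof.
rewrite cmodE !vnormE -sqrtrM ?nn_ge0 //; apply: ler_wsqrtr; exact: CS.
Qed.

Lemma vnormD x y : vnorm (x + y) <= vnorm x + vnorm y.
Proof.
rewrite -(@ler_pXn2r _ 2) // ?nnegrE ?addr_ge0 ?vnorm_ge0 //.
rewrite sqrrD !vnorm_sqr nnD.
have := le_trans (Re_le_cmod (cinner x y)) (CS' x y).
lra.
Qed.

Lemma vnormB x y : vnorm (x - y) <= vnorm x + vnorm y.
Proof. by rewrite -(vnormN y); apply: vnormD. Qed.

Lemma vnorm0 : vnorm (0 : V) = 0.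
Proof. by rewrite vnormE nn0 sqrtr0. Qed.


Lemma cinnerZlr (k : R) u x : cinner x (k%:C *: u) = k%:C * cinner x u.
Proof. by rewrite cinnerZr cjR. Qed.

Lemma frob_sqr (A : 'M[C]_n) : frob A ^+ 2 = \sum_(i < n) \sum_(j < n) cmod (A i j) ^+ 2.
Proof. by rewrite /frob sqr_sqrtr // sumr_ge0 // => i _; rewrite sumr_ge0 // => j _; rewrite sqr_ge0. Qed.

Lemma frob_ge0 (A : 'M[C]_n) : 0 <= frob A.
Proof. exact: sqrtr_ge0. Qed.

Lemma nn_mul (A : 'M[C]_n) x : nn (A *m x) <= frob A ^+ 2 * nn x.
Proof.
rewrite frob_sqr mulr_suml /nn; apply: ler_sum => i _.
pose r : V := \col_j cj (A i j).
have e1 : (A *m x) i 0 = cinner x r.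
  rewrite mxE /cinner; apply: eq_bigr => j _; by rewrite mxE cjK mulrC.
have e2 : \sum_(j < n) cmod (A i j) ^+ 2 = nn r.
  rewrite /nn; apply: eq_bigr => j _; by rewrite mxE !cmod_sqr cm2J.
by rewrite e1 e2 cmod_sqr mulrC CS.
Qed.

Lemma vnorm_mul (A : 'M[C]_n) x : vnorm (A *m x) <= frob A * vnorm x.
Proof.
have e : frob A = Num.sqrt (frob A ^+ 2) by rewrite sqrtr_sqr ger0_norm // frob_ge0.
rewrite vnormE {1}e -sqrtrM ?sqr_ge0 //.
exact/ler_wsqrtr/nn_mul.
Qed.

Lemma nn_gt0 u : u != 0 -> 0 < nn u.
Proof. by move=> h; rewrite lt_def nn_ge0 andbT; apply: contra h => /eqP/nn_eq0 ->. Qed.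

Lemma cinner_self_neq0 u : u != 0 -> cinner u u != 0.
Proof. by move=> h; rewrite cinner_nn; apply/eqP => /complexI; apply/eqP; rewrite gt_eqF // nn_gt0. Qed.

Lemma Pperp_orth v u : v != 0 -> cinner (Pperp v u) v = 0.
Proof.
move=> hv; rewrite /Pperp cinnerBl cinnerZl divfK ?subrr //; exact: cinner_self_neq0.
Qed.

Lemma PperpD v x y : Pperp v (x + y) = Pperp v x + Pperp v y.
Proof. by rewrite /Pperp cinnerDl mulrDl scalerDl; rewrite opprD addrACA. Qed.

Lemma PperpN v x : Pperp v (- x) = - Pperp v x.
Proof. by rewrite /Pperp cinnerNl mulNr scaleNr opprB opprK addrC. Qed.

Lemma PperpB v x y : Pperp v (x - y) = Pperp v x - Pperp v y.
Proof. by rewrite PperpD PperpN. Qed.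

Lemma Pperp_scale k v u : k != 0 -> Pperp (k *: v) u = Pperp v u.
Proof.
move=> hk; rewrite /Pperp cinnerZr !cinnerZl cinnerZr scalerA; congr (_ - _ *: _).
have [->|hv] := eqVneq (cinner v v) 0; first by rewrite !mulr0 !invr0 !mulr0 mul0r.
have hk' : cj k != 0 by rewrite cj_eq0.
by field; apply/and3P.
Qed.

Lemma Tv_scale k v w : k != 0 -> Tv (k *: v) w <-> Tv v w.
Proof.
move=> hk; rewrite /Tv /= cinnerZr; split => [/eqP|->]; last by rewrite mulr0.
by rewrite mulf_eq0 cj_eq0 (negbTE hk) /= => /eqP.
Qed.

Lemma Alv_scale (A : 'M[C]_n) l k v w : k != 0 -> Alv A l (k *: v) w = Alv A l v w.
Proof. by move=> hk; rewrite /Alv Pperp_scale. Qed.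

Lemma AlvB (A : 'M[C]_n) l v x y : Alv A l v (x - y) = Alv A l v x - Alv A l v y.
Proof. by rewrite /Alv mulmxBr PperpB. Qed.

Lemma TvB v x y : Tv v x -> Tv v y -> Tv v (x - y).
Proof. by rewrite /Tv /= cinnerBl => -> ->; rewrite subrr. Qed.

Lemma Tv0 v : Tv v 0.
Proof. by rewrite /Tv /= cinner0l. Qed.

Lemma vnorm_Pperp v u : v != 0 -> vnorm (Pperp v u) <= vnorm u.
Proof.
move=> hv; have e : u = Pperp v u + (cinner u v / cinner v v) *: v by rewrite /Pperp subrK.
rewrite !vnormE; apply: ler_wsqrtr; rewrite [X in _ <= nn X]e nn_orth.
  by rewrite lerDl nn_ge0.
by rewrite cinnerZr Pperp_orth // mulr0.
Qed.

Lemma Alv_in (A : 'M[C]_n) l v w : v != 0 -> Tv v (Alv A l v w).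
Proof. by move=> hv; rewrite /Tv /Alv /=; apply: Pperp_orth. Qed.

End Basics.


Section Refl.
Variable R : realType.
Variable n : nat.
Local Notation C := R[i].
Local Notation V := 'cV[C]_n.
Implicit Types (u v w x y : V) (k z : C).
Local Notation cj z := (@Num.conj C z).

Definition Hr u x : V := x - (2%:R * cinner x u / cinner u u) *: u.

Lemma cj2 : cj (2%:R) = 2%:R :> C. Proof. exact: rmorph_nat. Qed.

Lemma cinner_selfR u : cj (cinner u u) = cinner u u.
Proof. by rewrite cinner_nn cjR. Qed.

Lemma Hr_inner u x y : cinner u u != 0 -> cinner (Hr u x) (Hr u y) = cinner x y.
Proof.
move=> hu; rewrite /Hr !cinnerBl !cinnerBr !cinnerZl !cinnerZr !conjM conjV cj2 cinner_selfR.
rewrite -!cinnerC (cinnerC u x).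
by field.
Qed.

Lemma HrD u x y : Hr u (x + y) = Hr u x + Hr u y.
Proof. by rewrite /Hr cinnerDl mulrDr mulrDl scalerDl opprD addrACA. Qed.

Lemma HrZ u k x : Hr u (k *: x) = k *: Hr u x.
Proof. by rewrite /Hr cinnerZl scalerBr scalerA; congr (_ - _ *: _); ring. Qed.

Lemma HrN u x : Hr u (- x) = - Hr u x.
Proof. by rewrite -scaleN1r HrZ scaleN1r. Qed.

Lemma HrB u x y : Hr u (x - y) = Hr u x - Hr u y.
Proof. by rewrite HrD HrN. Qed.


Section Rot.
Variables a b : V.
Variable c : R.
Hypothesis ha : nn a = 1.
Hypothesis hb : nn b = 1.
Hypothesis hba : cinner b a = c%:C.
Hypothesis hc : 0 <= c.

Let e : V := a + b.
Definition Ust x : V := Hr e (Hr b x).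

Lemma iaa : cinner a a = 1. Proof. by rewrite cinner_nn ha. Qed.
Lemma ibb : cinner b b = 1. Proof. by rewrite cinner_nn hb. Qed.
Lemma iab : cinner a b = c%:C. Proof. by rewrite cinnerC hba cjR. Qed.
Lemma iee : cinner e e = 2%:R * (1 + c%:C).
Proof. by rewrite /e cinnerDl !cinnerDr iaa ibb iab hba; ring. Qed.

Lemma c1_neq0 : (1 + c%:C) != 0 :> C.
Proof.
apply/eqP => h; have : (1 + c)%:C = 0 :> C by rewrite rcD h.
by move/complexI => /eqP; rewrite gt_eqF // ltr_pwDl.
Qed.

Lemma iee_neq0 : cinner e e != 0.
Proof. by rewrite iee mulf_neq0 ?c1_neq0 // pnatr_eq0. Qed.

Lemma ibb_neq0 : cinner b b != 0.
Proof. by rewrite ibb oner_neq0. Qed.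

Lemma Ust_inner x y : cinner (Ust x) (Ust y) = cinner x y.
Proof. by rewrite /Ust !Hr_inner // ?iee_neq0 ?ibb_neq0. Qed.

Lemma Ust_vnorm x : vnorm (Ust x) = vnorm x.
Proof. rewrite !vnormE; congr Num.sqrt; apply: complexI; by rewrite -!cinner_nn Ust_inner. Qed.

Lemma UstB x y : Ust (x - y) = Ust x - Ust y.
Proof. by rewrite /Ust !HrB. Qed.

Lemma UstZ k x : Ust (k *: x) = k *: Ust x.
Proof. by rewrite /Ust !HrZ. Qed.

Lemma ieR y : cinner y e = cinner y a + cinner y b.
Proof. by rewrite /e cinnerDr. Qed.

Definition gv : V := (c / (1 + c))%:C *: b + (- (1 + c)^-1)%:C *: a.

Lemma rc1 : (1 : R)%:C = 1 :> C. Proof. by []. Qed.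
Lemma rcN (r : R) : (- r)%:C = - r%:C :> C.
Proof. exact: (rmorphN (real_complex R : {rmorphism R -> C})). Qed.

Lemma Ust_formula x : Ust x - x = cinner x b *: (a - b) + cinner x gv *: e.
Proof.
rewrite /Ust /Hr iee !ieR !(cinnerBl, cinnerZl, ibb, hba) /gv cinnerDr !cinnerZlr.
rewrite !(rcM, rcV, rcN, rcD, rc1).
have h1 := c1_neq0.
apply/matrixP => i j; rewrite !mxE /e ?mxE.
field; done.
Qed.

Lemma Ust_b : Ust b = a.
Proof.
have h := Ust_formula b.
rewrite /gv cinnerDr !cinnerZlr ibb hba !(rcM, rcV, rcN, rcD, rc1) in h.
have h1 := c1_neq0.
rewrite (_ : c%:C * (1 + c%:C)^-1 * 1 + - (1 + c%:C)^-1 * c%:C = 0) in h; last by field.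
rewrite scale0r addr0 scale1r in h.
by rewrite -(subrK b (Ust b)) h subrK.
Qed.


Lemma cm2R (r : R) : cm2 (r%:C) = r ^+ 2.
Proof. by rewrite /cm2 /=; ring. Qed.

Lemma nn_comb (s t : R) : nn (s%:C *: b + t%:C *: a) = s ^+ 2 + t ^+ 2 + 2 * s * t * c.
Proof.
rewrite nnD !nnZ !cm2R ha hb cinnerZl cinnerZlr hba -!rcM /=; ring.
Qed.

Lemma nn_f : nn (a - b) = 2 - 2 * c.
Proof.
have -> : a - b = (-1)%:C *: b + 1%:C *: a by rewrite rcN rc1 scaleN1r scale1r addrC.
by rewrite nn_comb; ring.
Qed.

Lemma nn_e : nn e = 2 + 2 * c.
Proof.
have -> : e = 1%:C *: b + 1%:C *: a by rewrite rc1 !scale1r addrC.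
by rewrite nn_comb; ring.
Qed.

Lemma nn_gv : nn gv * nn e = 2 * (1 - c).
Proof.
rewrite /gv nn_comb nn_e.
have h : 1 + c != 0 by rewrite gt_eqF // ltr_pwDl.
by field.
Qed.

Lemma ife : cinner (a - b) e = 0.
Proof. by rewrite ieR !cinnerBl iaa ibb iab hba; ring. Qed.

Lemma Ust_dist x : nn (Ust x - x) <= 4 * (1 - c) * nn x.
Proof.
rewrite Ust_formula nn_orth; last by rewrite cinnerZl cinnerZr ife !mulr0.
rewrite !nnZ.
have h1 : cm2 (cinner x b) <= nn x by have := CS x b; rewrite hb mulr1.
have h2 : cm2 (cinner x gv) <= nn x * nn gv by apply: CS.
have h3 := nn_ge0 (a - b); have h4 := nn_ge0 e; have h5 := nn_gv.
have h6 : cm2 (cinner x b) * nn (a - b) <= nn x * nn (a - b) by rewrite ler_wpM2r.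
have h7 : cm2 (cinner x gv) * nn e <= nn x * nn gv * nn e by rewrite ler_wpM2r.
rewrite nn_f in h6; rewrite -mulrA h5 in h7; rewrite nn_f.
lra.
Qed.

Lemma Ust_dist' x : vnorm (Ust x - x) <= 2 * Num.sqrt (1 - c) * vnorm x.
Proof.
have hc1 : c <= 1 by have := nn_ge0 (a - b); rewrite nn_f; lra.
rewrite -(@ler_pXn2r _ 2) // ?nnegrE ?vnorm_ge0 ?mulr_ge0 ?vnorm_ge0 ?sqrtr_ge0 //.
rewrite !exprMn !vnorm_sqr sqr_sqrtr ?subr_ge0 //.
have := Ust_dist x; lra.
Qed.


Lemma a_neq0 : a != 0.
Proof. by apply/eqP => h; move: ha; rewrite h nn0 => /eqP; rewrite eq_sym oner_eq0. Qed.

Lemma Ust_Pperp y : Ust (Pperp b y) = Pperp a (Ust y).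
Proof.
rewrite /Pperp ibb iaa !divr1 UstB UstZ Ust_b; congr (_ - _ *: _).
by rewrite -Ust_b Ust_inner.
Qed.

Lemma Tv_Ust w : Tv b w -> Tv a (Ust w).
Proof. by rewrite /Tv /= -Ust_b Ust_inner. Qed.

Lemma core (A : 'M[C]_n) l (m : R) : frob A <= 1 -> 0 <= m ->
  (forall w, Tv a w -> vnorm w <= m * vnorm (Alv A l a w)) ->
  forall w', Tv b w' ->
  vnorm w' <= m * (vnorm (Alv A l b w') + 4 * Num.sqrt (1 - c) * vnorm w').
Proof.
move=> hA hm H w' hw'.
have := H _ (Tv_Ust hw'); rewrite Ust_vnorm => h.
apply: (le_trans h); apply: ler_wpM2l => //.
set s := Num.sqrt (1 - c).
have s0 : 0 <= s by apply: sqrtr_ge0.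
set w := Ust w'.
have eB : vnorm (Alv A l b w') = vnorm (Pperp a (Ust ((A - l%:M) *m w'))).
  by rewrite /Alv -Ust_Pperp Ust_vnorm.
rewrite eB.
set D := Ust (A *m w') - A *m w.
have eU : Ust ((A - l%:M) *m w') = (A - l%:M) *m w + D.
  rewrite /D !mulmxBl !mul_scalar_mx UstB UstZ -/w.
  by rewrite [RHS]addrC addrA subrK.
have eA : Alv A l a w = Pperp a (Ust ((A - l%:M) *m w')) - Pperp a D.
  by rewrite /Alv eU PperpD addrK.
rewrite eA.
apply: (le_trans (vnormB _ _)); rewrite lerD2l.
apply: (le_trans (vnorm_Pperp _ a_neq0)).
have eD : D = (Ust (A *m w') - A *m w') - A *m (w - w').
  by rewrite mulmxBr /D opprB addrA subrK.
rewrite eD; apply: (le_trans (vnormB _ _)).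
have d1 := Ust_dist' (A *m w').
have d2 : vnorm (A *m (w - w')) <= vnorm (w - w').
  apply: (le_trans (vnorm_mul _ _)).
  by rewrite -[X in _ <= X]mul1r ler_wpM2r // vnorm_ge0.
have d3 := Ust_dist' w'.
have d4 : vnorm (A *m w') <= vnorm w'.
  apply: (le_trans (vnorm_mul _ _)).
  by rewrite -[X in _ <= X]mul1r ler_wpM2r // vnorm_ge0.
have d5 : 2 * s * vnorm (A *m w') <= 2 * s * vnorm w' by rewrite ler_wpM2l // mulr_ge0.
rewrite -/s in d1 d3 d5.
lra.
Qed.

End Rot.
End Refl.


Section Surj.
Variable R : realType.
Variable n : nat.
Local Notation C := R[i].
Local Notation V := 'cV[C]_n.
Implicit Types (u v w x y : V) (k z : C).
Local Notation cj z := (@Num.conj C z).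

Definition vh v : 'rV[C]_n := \row_j cj (v j 0).
Definition Qm v : 'M[C]_n := (cinner v v)^-1 *: (v *m vh v).

Lemma vh_mul v x : vh v *m x = (cinner x v)%:M.
Proof.
apply/matrixP => i j; rewrite !ord1 !mxE /cinner eqxx mulr1n.
by apply: eq_bigr => k _; rewrite mxE mulrC.
Qed.

Lemma Qm_mul v x : Qm v *m x = (cinner x v / cinner v v) *: v.
Proof. by rewrite /Qm -scalemxAl -mulmxA vh_mul mul_mx_scalar scalerA mulrC. Qed.

Lemma Pperp_mx v x : Pperp v x = (1%:M - Qm v) *m x.
Proof. by rewrite mulmxBl mul1mx Qm_mul. Qed.

Lemma inj_unit (G : 'M[C]_n) : (forall w : V, G *m w = 0 -> w = 0) -> G \in unitmx.
Proof.
move=> H; rewrite -unitmx_tr -row_free_unit -kermx_eq0; apply/eqP/row_matrixP => i.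
rewrite row0; set r := row i _.
have h : r *m G^T = 0 by rewrite /r -row_mul mulmx_ker row0.
have : G *m r^T = 0 by rewrite -[G]trmxK -trmx_mul h trmx0.
by move/H => /(congr1 trmx); rewrite trmxK trmx0.
Qed.

Lemma LB_inv (A : 'M[C]_n) l v (m : R) : v != 0 -> 0 <= m ->
  (forall w, Tv v w -> vnorm w <= m * vnorm (Alv A l v w)) ->
  Alv_invertible A l v.
Proof.
move=> hv hm H u hu.
pose P := 1%:M - Qm v.
pose G := P *m (A - l%:M) *m P + Qm v.
have Gw w : G *m w = Alv A l v (Pperp v w) + Qm v *m w.
  by rewrite /G mulmxDl -!mulmxA /Alv !Pperp_mx.
have inner_G w : cinner (G *m w) v = cinner w v.
  rewrite Gw cinnerDl Alv_in // Qm_mul cinnerZl add0r divfK //.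
  exact: cinner_self_neq0.
have Gu : G \in unitmx.
  apply: inj_unit => w hw.
  have w0 : cinner w v = 0 by rewrite -inner_G hw cinner0l.
  have pw : Pperp v w = w by rewrite /Pperp w0 mul0r scale0r subr0.
  have : Alv A l v w = 0 by move: hw; rewrite Gw Qm_mul w0 mul0r scale0r addr0 pw.
  move=> hA; have := H w w0; rewrite hA vnorm0 mulr0 => hle.
  by apply: vnorm_eq0; apply/le_anti; rewrite hle vnorm_ge0.
have uniq w1 w2 : Tv v w1 -> Tv v w2 -> Alv A l v w1 = Alv A l v w2 -> w1 = w2.
  move=> h1 h2 he; apply/eqP; rewrite -subr_eq0; apply/eqP.
  have := H _ (TvB h1 h2); rewrite AlvB he subrr vnorm0 mulr0 => hle.
  by apply: vnorm_eq0; apply/le_anti; rewrite hle vnorm_ge0.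
set w := invmx G *m u.
have hGw : G *m w = u by rewrite /w mulKVmx.
have w0 : cinner w v = 0 by rewrite -inner_G hGw; exact: hu.
have tw : Tv v w by exact: w0.
have hAw : Alv A l v w = u.
  move: hGw; rewrite Gw Qm_mul w0 mul0r scale0r addr0.
  by rewrite /Pperp w0 mul0r scale0r subr0.
exists w; split; first by split.
by move=> w' [tw' hw']; apply: uniq => //; rewrite hw'.
Qed.

End Surj.


Section Sup.
Variable R : realType.
Variable n : nat.
Local Notation C := R[i].
Local Notation V := 'cV[C]_n.
Implicit Types (u v w x y : V) (k z : C).

Lemma opnorm_ge0 (A : 'M[C]_n) l v : (0 <= Alv_inv_opnorm A l v)%E.
Proof.
apply: le_ereal_sup_tmp; exists 0%:E => //.
exists 0, 0; split; first exact: Tv0.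
split; first exact: Tv0.
split; first by rewrite /Alv mulmx0 /Pperp cinner0l mul0r scale0r subr0.
by rewrite vnorm0 mul0r.
Qed.

Lemma LB_opnorm (A : 'M[C]_n) l v (m : R) : 0 <= m ->
  (forall w, Tv v w -> vnorm w <= m * vnorm (Alv A l v w)) ->
  (Alv_inv_opnorm A l v <= m%:E)%E.
Proof.
move=> hm H; apply: ge_ereal_sup => x [u [w [hu [hw [hA ->]]]]].
rewrite lee_fin; have := H w hw; rewrite hA => h.
have [u0|un] := eqVneq (vnorm u) 0; first by rewrite u0 invr0 mulr0.
by rewrite ler_pdivrMr // lt_def un vnorm_ge0.
Qed.

Lemma opnorm_LB (A : 'M[C]_n) l v (r : R) : v != 0 ->
  Alv_invertible A l v -> Alv_inv_opnorm A l v = r%:E ->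
  forall w, Tv v w -> vnorm w <= r * vnorm (Alv A l v w).
Proof.
move=> hv hI hr w hw.
set u := Alv A l v w.
have hu : Tv v u by apply: Alv_in.
have hx : ((vnorm w / vnorm u)%:E <= r%:E)%E.
  rewrite -hr; apply: ereal_sup_ubound; exists u, w; do !split => //.
rewrite lee_fin in hx.
have [u0|un] := eqVneq (vnorm u) 0.
  have u00 : u = 0 by apply: vnorm_eq0.
  have [w0 [_ Hw0]] := hI u hu.
  have e1 : w0 = w by apply: Hw0; split.
  have e2 : w0 = 0.
    apply: Hw0; split; first exact: Tv0.
    by rewrite u00 /Alv mulmx0 /Pperp cinner0l mul0r scale0r subr0.
  by rewrite -e1 e2 vnorm0 u0 mulr0.
by rewrite -ler_pdivrMr // lt_def un vnorm_ge0.
Qed.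

End Sup.


Section Final.
Variable R : realType.
Variable n : nat.
Local Notation C := R[i].
Local Notation V := 'cV[C]_n.
Implicit Types (u v w x y : V) (k z : C).
Local Notation cj z := (@Num.conj C z).

Lemma cmod_eq0 z : cmod z = 0 -> z = 0.
Proof. by move=> h; apply: cm2_eq0; rewrite -cmod_sqr h expr0n. Qed.

Lemma vnorm_gt0 v : v != 0 -> 0 < vnorm v.
Proof. by move=> hv; rewrite vnormE sqrtr_gt0 nn_gt0. Qed.

Lemma nn_unit v : v != 0 -> nn (((vnorm v)^-1)%:C *: v) = 1.
Proof.
move=> hv; rewrite nnZ cm2R -vnorm_sqr exprVn mulVf //.
by rewrite sqrf_eq0 gt_eqF // vnorm_gt0.
Qed.

Lemma normalize v v' : v != 0 -> v' != 0 -> exists k k',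
  [/\ k != 0, k' != 0, nn (k *: v) = 1, nn (k' *: v') = 1 &
   cinner (k' *: v') (k *: v) = (cmod (cinner v v') / (vnorm v * vnorm v'))%:C].
Proof.
move=> hv hv'.
set z := cinner v' v.
pose be : C := if z == 0 then 1 else cj z / (cmod z)%:C.
have hbe : cm2 be = 1 /\ be * z = (cmod z)%:C.
  rewrite /be; case: eqP => [->|hz].
    split; first by rewrite /cm2 /=; ring.
    by rewrite mulr0 (_ : cmod 0 = 0) // cmodE cm20 sqrtr0.
  have cz : cmod z != 0 by apply/eqP => /cmod_eq0.
  split.
    by rewrite cm2M cm2J -rcV cm2R -cmod_sqr exprVn mulfV // sqrf_eq0.
  have cz' : (cmod z)%:C != 0 :> C by apply/eqP => /complexI; apply/eqP.
  rewrite mulrAC (mulrC (cj z) z) -cm2E -cmod_sqr expr2 rcM.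
  by field.
case: hbe => hbe1 hbe2.
have hbe0 : be != 0 by apply/eqP => h; move: hbe1; rewrite h cm20 => /eqP; rewrite eq_sym oner_eq0.
have vn := vnorm_gt0 hv; have vn' := vnorm_gt0 hv'.
have r0 : ((vnorm v)^-1)%:C != 0 :> C.
  by apply/eqP => /complexI /eqP; rewrite invr_eq0 gt_eqF.
have r0' : ((vnorm v')^-1)%:C != 0 :> C.
  by apply/eqP => /complexI /eqP; rewrite invr_eq0 gt_eqF.
exists ((vnorm v)^-1)%:C, (be * ((vnorm v')^-1)%:C); split => //.
- by rewrite mulf_neq0.
- exact: nn_unit.
- by rewrite -scalerA nnZ nn_unit // hbe1 mulr1.
rewrite cinnerZl cinnerZr cjR -/z.
have -> : cmod (cinner v v') = cmod z by rewrite /z cinnerC !cmodE cm2J.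
transitivity ((be * z) * (((vnorm v')^-1)%:C * ((vnorm v)^-1)%:C)); first by ring.
rewrite hbe2 -!rcM; congr (_ %:C); field.
by apply/andP; split; rewrite gt_eqF.
Qed.


Definition LBp (A : 'M[C]_n) l x (m : R) :=
  forall w, Tv x w -> vnorm w <= m * vnorm (Alv A l x w).

Lemma LB_scale (A : 'M[C]_n) l k x m : k != 0 -> LBp A l (k *: x) m <-> LBp A l x m.
Proof.
move=> hk; split => H w hw.
  by rewrite -(Alv_scale A l x w hk); apply: H; apply/(Tv_scale x w hk).
by rewrite (Alv_scale A l x w hk); apply: H; apply/(Tv_scale x w hk).
Qed.

Lemma LB_step (A : 'M[C]_n) l a b (c m : R) :
  nn a = 1 -> nn b = 1 -> cinner b a = c%:C -> 0 <= c -> frob A <= 1 -> 0 <= m ->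
  4 * Num.sqrt (1 - c) * m < 1 ->
  LBp A l a m -> LBp A l b (m / (1 - 4 * Num.sqrt (1 - c) * m)).
Proof.
move=> ha hb hba hc hA hm hk H w hw.
have := core ha hb hba hc hA hm H hw.
set K := 4 * Num.sqrt (1 - c); set X := vnorm (Alv A l b w) => h.
have hk' : 0 < 1 - K * m by rewrite subr_gt0.
rewrite mulrAC ler_pdivlMr //.
lra.
Qed.

Lemma mu_fin (A : 'M[C]_n) l v (r : R) : frob A = 1 -> v != 0 ->
  mu A l v = r%:E -> 0 <= r /\ LBp A l v r.
Proof.
move=> hF hv; rewrite /mu; case: asboolP => hI // ; rewrite hF mul1e => h.
split; first by rewrite -lee_fin -h opnorm_ge0.
exact: opnorm_LB.
Qed.

Lemma mu_le (A : 'M[C]_n) l v (m : R) : frob A = 1 -> v != 0 -> 0 <= m ->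
  LBp A l v m -> (mu A l v <= m%:E)%E.
Proof.
move=> hF hv hm H; rewrite /mu; case: asboolP => hI; last first.
  by exfalso; apply: hI; exact: (LB_inv hv hm H).
by rewrite hF mul1e; apply: LB_opnorm.
Qed.

Lemma mu_ge0 (A : 'M[C]_n) l v : frob A = 1 -> (0 <= mu A l v)%E.
Proof.
move=> hF; rewrite /mu; case: asboolP => hI; last exact: le0y.
by rewrite hF mul1e opnorm_ge0.
Qed.

End Final.


Unset Implicit Arguments. Set Strict Implicit.
Local Close Scope complex_scope.
Theorem lemma4p4 (R : realType) (n : nat) (A : 'M[R[i]]_n) (l : R[i])
    (v v' : 'cV[R[i]]_n) (eps : R) :
  frob A = 1 -> v != 0 -> v' != 0 -> A *m v = l *: v ->
  ((36 / 10 : R)%:E * mu A l v * (dP v v')%:E <= eps%:E)%E -> eps < 1 ->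
  (mu A l v * ((1 + eps)^-1)%:E <= mu A l v' /\
   mu A l v' <= mu A l v * ((1 - eps)^-1)%:E)%E.
Proof.
move=> hF hv hv' _ hyp heps.
have [k [k' [hk hk' ha hb hba]]] := normalize hv hv'.
set c := cmod (cinner v v') / (vnorm v * vnorm v') in hba.
have c0 : 0 <= c by rewrite /c divr_ge0 ?cmod_ge0 // mulr_ge0 ?vnorm_ge0.
have hab : cinner (k *: v) (k' *: v') = (c%:C)%C by rewrite cinnerC hba cjR.
have c1 : c <= 1.
  have := CS (k' *: v') (k *: v); rewrite ha hb hba cm2R mulr1 => h.
  nra.
have hd : dP v v' = acos c by [].
have hK : 4 * Num.sqrt (1 - c) <= 36 / 10 * dP v v' by rewrite hd trig_bound // c0 c1.
set K := 4 * Num.sqrt (1 - c) in hK.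
have K0 : 0 <= K by rewrite /K mulr_ge0 // sqrtr_ge0.
have d0 : 0 <= dP v v' by rewrite hd acos_ge0 // c1 andbT; lra.
have hfA : frob A <= 1 by rewrite hF.
have stepf : forall m, 0 <= m -> K * m < 1 -> LBp A l v m -> LBp A l v' (m / (1 - K * m)).
  move=> m hm hKm H; apply/(LB_scale _ _ _ _ hk').
  exact: (LB_step ha hb hba c0 hfA hm hKm (proj2 (LB_scale _ _ _ _ hk) H)).
have stepb : forall m, 0 <= m -> K * m < 1 -> LBp A l v' m -> LBp A l v (m / (1 - K * m)).
  move=> m hm hKm H; apply/(LB_scale _ _ _ _ hk).
  exact: (LB_step hb ha hab c0 hfA hm hKm (proj2 (LB_scale _ _ _ _ hk') H)).
have M0 := mu_ge0 l v hF.
have M'0 := mu_ge0 l v' hF.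
case hM : (mu A l v) => [r| |]; last by rewrite hM in M0.
- have [r0 LBv] := mu_fin hF hv hM.
  rewrite hM -!EFinM lee_fin in hyp.
  have Kr : K * r <= eps.
    have : K * r <= 36 / 10 * dP v v' * r by rewrite ler_wpM2r.
    lra.
  have Kr1 : K * r < 1 by lra.
  have Kr0 : 0 <= K * r by rewrite mulr_ge0.
  have hM'le : (mu A l v' <= (r / (1 - K * r))%:E)%E.
    apply: mu_le => //; last exact: stepf.
    by rewrite divr_ge0 // subr_ge0 ltW.
  split.
  + case hM' : (mu A l v') => [r'| |]; last by rewrite hM' in M'0.
    * have [r'0 LBv'] := mu_fin hF hv' hM'.
      rewrite -EFinM lee_fin ler_pdivrMr; last lra.
      have [Kr'|Kr'] := ltP (K * r') 1.
        have hm' : 0 <= r' / (1 - K * r') by rewrite divr_ge0 // subr_ge0 ltW.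
        have := mu_le hF hv hm' (stepb r' r'0 Kr' LBv').
        rewrite hM lee_fin ler_pdivlMr; last lra.
        move=> h.
        have : K * r * r' <= eps * r' by rewrite ler_wpM2r.
        nra.
      have : r * 1 <= r * (K * r') by rewrite ler_wpM2l.
      have : K * r * r' <= eps * r' by rewrite ler_wpM2r.
      nra.
    * exact: leey.
  + apply: (le_trans hM'le); rewrite -EFinM lee_fin.
    rewrite ler_pdivrMr; last lra.
    rewrite mulrAC ler_pdivlMr; last lra.
    have : r * (1 - eps) <= r * (1 - K * r) by rewrite ler_wpM2l //; lra.
    lra.
- rewrite hM in hyp.
  have d00 : dP v v' = 0.
    apply/eqP; rewrite eq_le d0 andbT; apply/negP => /negP; rewrite -ltNge => dpos.
    have e1 : ((36 / 10 : R)%:E * +oo = +oo)%E by rewrite gt0_muley // lte_fin; lra.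
    have e2 : (+oo * (dP v v')%:E = +oo)%E by rewrite gt0_mulye // lte_fin.
    by move: hyp; rewrite e1 e2 leye_eq.
  have K00 : K = 0 by apply/le_anti; rewrite K0 andbT; rewrite d00 mulr0 in hK.
  have eps0 : 0 <= eps by move: hyp; rewrite d00 mule0 lee_fin.
  split.
  + rewrite gt0_mulye ?lte_fin ?invr_gt0; last lra.
    case hM' : (mu A l v') => [r'| |]; last by rewrite hM' in M'0.
    * have [r'0 LBv'] := mu_fin hF hv' hM'.
      have := mu_le hF hv _ (stepb r' r'0 _ LBv').
      rewrite hM K00 mul0r subr0 divr1 leye_eq => /(_ r'0) /(_ ltr01) //.
    * exact: lexx.
  + by rewrite gt0_mulye ?leey // lte_fin invr_gt0; lra.
Qed.
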